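(* Let $\mathcal B,\tilde{\mathcal B}$ be any two circles of $\mathbb M(q)$ and let $\tau$ be any Möbius transformation of $\mathbb M(q)$. Then $$\operatorname{cap}(\mathcal B,\tilde{\mathcal B})=\operatorname{cap}(\tau(\mathcal B),\tau(\tilde{\mathcal B})).$$
   Context: Let $p$ be an odd prime, $m\ge1$, and $q=p^m$. $GF(q^2)$ denotes the quadratic extension of $GF(q)$, and for $z\in GF(q^2)$ we write $\bar z:=z^{q}$. The Miquelian Möbius plane $\mathbb M(q)$ has point set $GF(q^2)\cup\{\infty\}$ and circles of two types: for $s\in GF(q^2)$ and $c\in GF(q)\setminus\{0\}$, $\mathcal B^1_{(s,c)}=\{z\in GF(q^2):(z-s)(\bar z-\bar s)=c\}$; for $s\in GF(q^2)\setminus\{0\}$ and $c\in GF(q)$, $\mathcal B^2_{(s,c)}=\{z\in GF(q^2):\bar s z+s\bar z=c\}\cup\{\infty\}$ (note $\mathcal B^2_{(\lambda s,\lambda c)}=\mathcal B^2_{(s,c)}$ for $\lambda\in GF(q)\setminus\{0\}$). A Möbius transformation is a map $\Phi(z)=\frac{az+b}{cz+d}$ with $a,b,c,d\in GF(q^2)$, $ad-bc\neq0$, extended to $GF(q^2)\cup\{\infty\}$ by $\Phi(z)=\infty$ if $cz+d=0$, $\Phi(\infty)=a/c$ if $c\ne0$, $\Phi(\infty)=\infty$ if $c=0$; it maps circles to circles. The capacitance of a pair of circles is the element of $GF(q)$ defined by $\operatorname{cap}(\mathcal B^1_{(s_1,c_1)},\mathcal B^1_{(s_2,c_2)})=\frac{1}{c_1c_2}\bigl(c_1+c_2-(s_1-s_2)(\bar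 s_1-\bar s_2)\bigr)^2$, $\operatorname{cap}(\mathcal B^1_{(s_1,c_1)},\mathcal B^2_{(s_2,c_2)})=\operatorname{cap}(\mathcal B^2_{(s_2,c_2)},\mathcal B^1_{(s_1,c_1)})=\frac{1}{c_1s_2\bar s_2}(s_1\bar s_2+\bar s_1s_2-c_2)^2$, $\operatorname{cap}(\mathcal B^2_{(s_1,c_1)},\mathcal B^2_{(s_2,c_2)})=\frac{1}{s_1\bar s_1s_2\bar s_2}(s_1\bar s_2+\bar s_1s_2)^2$. *)

(* Defs.v *)
From HB Require Import structures.
From mathcomp Require Import all_boot all_order all_algebra all_field.
Set Implicit Arguments. Unset Strict Implicit. Unset Printing Implicit Defensive.
Import GRing.Theory.
Local Open Scope ring_scope.

(* L plays the role of GF(q^2); q is given explicitly (q = p^m, #|L| = q^2).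
   GF(q) is the subfield {z | z^q = z} of L; conjugation is z |-> z^q.
   Points of the Moebius plane: option L, with None = infinity. *)

Definition mconj (L : finFieldType) (q : nat) (z : L) : L := z ^+ q.
Definition inGFq (L : finFieldType) (q : nat) (z : L) : bool := z ^+ q == z.

Inductive circ (L : finFieldType) : Type :=
| Circ1 of L & L
| Circ2 of L & L.

Definition valid_circ (L : finFieldType) (q : nat) (B : circ L) : bool :=
  match B with
  | Circ1 s c => inGFq q c && (c != 0)
  | Circ2 s c => (s != 0) && inGFq q c
  end.

Definition circle_pts (L : finFieldType) (q : nat) (B : circ L) : {set option L} :=
  match B with
  | Circ1 s c => [set Some z | z in [set z : L | (z - s) * (mconj q z - mconj q s) == c]]
  | Circ2 s c => None |: [set Some z | z in [set z : L | mconj q s * z + s * mconj q z == c]]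
  end.

Definition mobius (L : finFieldType) (a b c d : L) (x : option L) : option L :=
  match x with
  | Some z => if c * z + d == 0 then None else Some ((a * z + b) / (c * z + d))
  | None => if c != 0 then Some (a / c) else None
  end.

Definition cap (L : finFieldType) (q : nat) (B B' : circ L) : L :=
  match B, B' with
  | Circ1 s1 c1, Circ1 s2 c2 =>
      (c1 + c2 - (s1 - s2) * (mconj q s1 - mconj q s2)) ^+ 2 / (c1 * c2)
  | Circ1 s1 c1, Circ2 s2 c2 =>
      (s1 * mconj q s2 + mconj q s1 * s2 - c2) ^+ 2 / (c1 * (s2 * mconj q s2))
  | Circ2 s2 c2, Circ1 s1 c1 =>
      (s1 * mconj q s2 + mconj q s1 * s2 - c2) ^+ 2 / (c1 * (s2 * mconj q s2))
  | Circ2 s1 c1, Circ2 s2 c2 =>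
      (s1 * mconj q s2 + mconj q s1 * s2) ^+ 2
        / (s1 * mconj q s1 * (s2 * mconj q s2))
  end.

(* Main.v *)
Require Import Defs.
From HB Require Import structures.
From mathcomp Require Import all_boot all_order all_algebra all_field.
From mathcomp Require Import ring zify.
Import GRing.Theory.
Local Open Scope ring_scope.
Set Implicit Arguments. Unset Strict Implicit. Unset Printing Implicit Defensive.

Definition Good (L : finFieldType) (q : nat) : Prop :=
  [/\ (forall x y : L, (x + y) ^+ q = x ^+ q + y ^+ q),
      (forall x : L, (x ^+ q) ^+ q = x),
      (2 : L) != 0,
      (exists i : L, i != 0 /\ i ^+ q = - i) &
      (forall c : L, c ^+ q = c -> c != 0 -> exists w, w * w ^+ q = c)].

Lemma cjD (L : finFieldType) q : Good L q -> forall x y : L, (x + y) ^+ q = x ^+ q + y ^+ q.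
Proof. by case. Qed.
Lemma cjK (L : finFieldType) q : Good L q -> forall x : L, (x ^+ q) ^+ q = x.
Proof. by case. Qed.
Lemma cj0 (L : finFieldType) q : Good L q -> (0:L) ^+ q = 0.
Proof. move=> h; have := cjD h 0 0; rewrite addr0 => /eqP; rewrite -subr_eq0.
  by rewrite opprD addrA subrr sub0r oppr_eq0 => /eqP. Qed.
Lemma cjN (L : finFieldType) q : Good L q -> forall x : L, (- x) ^+ q = - x ^+ q.
Proof. move=> h x; have := cjD h x (-x); rewrite subrr (cj0 h) => /eqP.
  by rewrite eq_sym addr_eq0 => /eqP ->; rewrite opprK. Qed.
Lemma cjB (L : finFieldType) q : Good L q -> forall x y : L, (x - y) ^+ q = x ^+ q - y ^+ q.
Proof. by move=> h x y; rewrite cjD // cjN. Qed.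
Lemma cjM (L : finFieldType) q (x y : L) : (x * y) ^+ q = x ^+ q * y ^+ q.
Proof. exact: exprMn. Qed.
Lemma cjV (L : finFieldType) q (x : L) : (x ^-1) ^+ q = (x ^+ q) ^-1.
Proof. exact: exprVn. Qed.
Lemma cj1 (L : finFieldType) q : (1 : L) ^+ q = 1.
Proof. exact: expr1n. Qed.
Lemma cj_eq0 (L : finFieldType) q (x : L) : Good L q -> (x ^+ q == 0) = (x == 0).
Proof. move=> h; apply/idP/idP => /eqP e; last by rewrite e cj0.
  by rewrite -(cjK h x) e cj0. Qed.
Lemma cj2 (L : finFieldType) q : Good L q -> (2 : L) ^+ q = 2.
Proof. by move=> h; rewrite cjD // cj1. Qed.


Definition herm (L : finFieldType) (q : nat) (B : circ L) : L * L * L :=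
  match B with
  | Circ1 s c => (1, - s, s * s ^+ q - c)
  | Circ2 s c => (0, s, - c)
  end.

Definition Qf (L : finFieldType) (q : nat) (H : L * L * L) (z1 z2 : L) : L :=
  let: (A, b, C) := H in
  A * z1 * z1 ^+ q + b ^+ q * z1 * z2 ^+ q + b * z1 ^+ q * z2 + C * z2 * z2 ^+ q.

Definition rep (L : finFieldType) (P : option L) : L * L :=
  match P with Some z => (z, 1) | None => (1, 0) end.

Definition Zs (L : finFieldType) (q : nat) (H : L * L * L) : {set option L} :=
  [set P | Qf q H (rep P).1 (rep P).2 == 0].

Definition Delta (L : finFieldType) (q : nat) (H : L * L * L) : L :=
  let: (A, b, C) := H in b * b ^+ q - A * C.

Definition bil (L : finFieldType) (q : nat) (H H' : L * L * L) : L :=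
  let: (A, b, C) := H in let: (A', b', C') := H' in
  A * C' + A' * C - b * b' ^+ q - b ^+ q * b'.

Lemma eq0_congr (R : zmodType) (x y : R) : x = y -> (x == 0) = (y == 0).
Proof. by move=> ->. Qed.

Lemma cap_herm (L : finFieldType) q (B B' : circ L) : Good L q ->
  cap q B B' = bil q (herm q B) (herm q B') ^+ 2 / (Delta q (herm q B) * Delta q (herm q B')).
Proof.
move=> h; case: B => s c; case: B' => s' c'; rewrite /cap /mconj /= ?cjN //;
  congr (_ / _); try ring.
Qed.

Lemma pts_herm (L : finFieldType) q (B : circ L) : Good L q ->
  circle_pts q B = Zs q (herm q B).
Proof.
move=> h; apply/setP => -[z|]; rewrite /Zs inE /= ?cj1 ?(cj0 h).
- case: B => s c /=; rewrite ?(mem_imset _ _ Some_inj) ?inE /mconj ?in_setU1 /=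
   ?(mem_imset _ _ Some_inj) ?inE /=.
  + by rewrite cjN // expr1n -[_ == c]subr_eq0; apply: eq0_congr; ring.
  + by rewrite -[_ == c]subr_eq0 expr1n; apply: eq0_congr; ring.
- case: B => s c /=.
  + rewrite /Qf /= expr1n (cj0 h) ?mulr0 ?mul0r ?addr0 ?mulr1 ?oner_eq0.
    by apply/imsetP => -[].
  + by rewrite in_setU1 eqxx /Qf /= (cj0 h) ?mulr0 ?mul0r ?addr0 ?eqxx.
Qed.


Definition tr (L : finFieldType) (q : nat) (a b c d : L) (H : L * L * L) : L * L * L :=
  let: (A, e, C) := H in
  (A * d * d ^+ q - e ^+ q * d * c ^+ q - e * d ^+ q * c + C * c * c ^+ q,
   - A * d ^+ q * b + e * d ^+ q * a + e ^+ q * b * c ^+ q - C * c ^+ q * a,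
   A * b * b ^+ q - e ^+ q * b * a ^+ q - e * b ^+ q * a + C * a * a ^+ q).

Definition fixd (L : finFieldType) (q : nat) (H : L * L * L) :=
  H.1.1 ^+ q = H.1.1 /\ H.2 ^+ q = H.2.

Ltac cjs h := rewrite ?(cjB h, cjD h, cjN h, cjM, cjK h, cj1).

Lemma Qf_tr (L : finFieldType) q (a b c d : L) H w1 w2 : Good L q -> fixd q H ->
  Qf q (tr q a b c d H) w1 w2 = Qf q H (d * w1 - b * w2) (- c * w1 + a * w2).
Proof.
case: H => [[A e] C] h [/= hA hC]; rewrite /Qf /=; cjs h; rewrite hA hC; ring.
Qed.

Lemma Qf_hom (L : finFieldType) q H (k z1 z2 : L) :
  Qf q H (k * z1) (k * z2) = k * k ^+ q * Qf q H z1 z2.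
Proof. case: H => [[A e] C]; rewrite /Qf !cjM; ring. Qed.

Lemma tr_fixd (L : finFieldType) q (a b c d : L) H : Good L q -> fixd q H ->
  fixd q (tr q a b c d H).
Proof.
case: H => [[A e] C] h [/= hA hC]; split => /=; cjs h; rewrite hA hC; ring.
Qed.

Lemma Delta_tr (L : finFieldType) q (a b c d : L) H : Good L q -> fixd q H ->
  Delta q (tr q a b c d H) = (a * d - b * c) * (a * d - b * c) ^+ q * Delta q H.
Proof.
case: H => [[A e] C] h [/= hA hC]; rewrite /Delta /=; cjs h; rewrite hA hC; ring.
Qed.

Lemma bil_tr (L : finFieldType) q (a b c d : L) H H' : Good L q -> fixd q H -> fixd q H' ->
  bil q (tr q a b c d H) (tr q a b c d H') = (a * d - b * c) * (a * d - b * c) ^+ q * bil q H H'.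
Proof.
case: H => [[A e] C]; case: H' => [[A' e'] C'] h [/= hA hC] [/= hA' hC'].
rewrite /bil /=; cjs h; rewrite hA hC hA' hC'; ring.
Qed.


Lemma rep_mob (L : finFieldType) (a b c d : L) P : a * d - b * c != 0 ->
  exists k, k != 0 /\ rep (mobius a b c d P) =
     (k * (a * (rep P).1 + b * (rep P).2), k * (c * (rep P).1 + d * (rep P).2)).
Proof.
move=> hdet; case: P => [z|]; cbn [mobius rep fst snd].
- case: eqP => hz.
  + have hab : a * z + b != 0.
      apply: contra hdet => /eqP hb; apply/eqP.
      have -> : b = - (a * z) + (a * z + b) by ring.
      rewrite hb addr0.
      have -> : d = - (c * z) + (c * z + d) by ring.
      rewrite hz addr0.
      ring.
    exists (a * z + b)^-1; split; first by rewrite invr_eq0.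
    by rewrite !mulr1 mulVf // hz mulr0.
  + exists (c * z + d)^-1; split; first by rewrite invr_eq0; exact/eqP.
    cbn [rep fst snd].
    rewrite !mulr1 mulVf; last by apply/eqP.
    by rewrite mulrC.
- case: eqP => hc; rewrite ?eqxx /=.
  + have ha : a != 0.
      apply: contra hdet => /eqP ha; rewrite ha hc; apply/eqP; ring.
    exists a^-1; split; first by rewrite invr_eq0.
    by rewrite hc !mulr0 !mul0r !addr0 !mulr1 mulVf // mulr0.
  + exists c^-1; split; first by rewrite invr_eq0; exact/eqP.
    rewrite !mulr0 !addr0 !mulr1 mulVf; last by apply/eqP.
    by rewrite mulrC.
Qed.

Lemma rep_inj (L : finFieldType) (P P' : option L) k : k != 0 ->
  rep P = (k * (rep P').1, k * (rep P').2) -> P = P'.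
Proof.
move=> hk; case: P => [z|]; case: P' => [z'|] //= [] e1 e2.
- by move: e2; rewrite mulr1 => e2; rewrite e1 -e2 mul1r.
- by move: e2; rewrite mulr0 => /eqP; rewrite oner_eq0.
- by move/eqP: e2; rewrite eq_sym mulr1 (negbTE hk).
Qed.

Lemma Qf_mob (L : finFieldType) q (a b c d : L) H x : Good L q -> fixd q H ->
  a * d - b * c != 0 ->
  exists k, k != 0 /\ Qf q (tr q a b c d H) (rep (mobius a b c d x)).1 (rep (mobius a b c d x)).2
     = k * k ^+ q * ((a * d - b * c) * (a * d - b * c) ^+ q) * Qf q H (rep x).1 (rep x).2.
Proof.
move=> h hH hdet; have [k [hk ->]] := rep_mob x hdet.
exists k; split => //; rewrite Qf_tr //.
set v1 := (rep x).1; set v2 := (rep x).2; cbn [fst snd].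
have -> : d * (k * (a * v1 + b * v2)) - b * (k * (c * v1 + d * v2)) = k * ((a * d - b * c) * v1) by ring.
have -> : - c * (k * (a * v1 + b * v2)) + a * (k * (c * v1 + d * v2)) = k * ((a * d - b * c) * v2) by ring.
by rewrite !Qf_hom !mulrA.
Qed.


Lemma mob_inv (L : finFieldType) (a b c d : L) y : a * d - b * c != 0 ->
  mobius a b c d (mobius d (- b) (- c) a y) = y.
Proof.
move=> hdet.
have hdet' : d * a - (- b) * (- c) != 0 by rewrite mulrNN mulrC.
have [k [hk e1]] := rep_mob (mobius d (- b) (- c) a y) hdet.
have [k' [hk' e2]] := rep_mob y hdet'.
apply: (@rep_inj _ _ _ (k * k' * (a * d - b * c))).
  by rewrite !mulf_neq0.
rewrite e1 e2; cbn [fst snd]; congr pair; ring.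
Qed.

Lemma img_tr (L : finFieldType) q (a b c d : L) H : Good L q -> fixd q H ->
  a * d - b * c != 0 ->
  mobius a b c d @: Zs q H = Zs q (tr q a b c d H).
Proof.
move=> h hH hdet.
have key : forall x, (mobius a b c d x \in Zs q (tr q a b c d H)) = (x \in Zs q H).
  move=> x; rewrite !inE; have [k [hk ->]] := Qf_mob x h hH hdet.
  rewrite !mulf_eq0 !cj_eq0 // (negbTE hk) (negbTE hdet) //.

apply/setP => y; apply/imsetP/idP.
- by case=> x hx ->; rewrite key.
- move=> hy; exists (mobius d (- b) (- c) a y); last by rewrite mob_inv.
  by rewrite -key mob_inv.
Qed.


Lemma good2 (L : finFieldType) q : Good L q -> (2 : L) != 0. Proof. by case. Qed.
Lemma goodi (L : finFieldType) q : Good L q -> exists i : L, i != 0 /\ i ^+ q = - i.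
Proof. by case. Qed.
Lemma goodN (L : finFieldType) q : Good L q ->
  forall c : L, c ^+ q = c -> c != 0 -> exists w, w * w ^+ q = c.
Proof. by case. Qed.

Lemma uniq2 (L : finFieldType) q (s c e C : L) : Good L q -> s != 0 ->
  c ^+ q = c -> C ^+ q = C ->
  (forall z, (s ^+ q * z + s * z ^+ q - c == 0) = (e ^+ q * z + e * z ^+ q + C == 0)) ->
  exists l, l ^+ q = l /\ e = l * s /\ C = l * (- c).
Proof.
move=> h s0 hc hC hz.
have [i [i0 hi]] := goodi h.
have h2 := good2 h.
have sq0 : s ^+ q != 0 by rewrite cj_eq0.
pose z0 := c / (2 * s ^+ q).
have cz0 : z0 ^+ q = c / (2 * s).
  by rewrite /z0 cjM cjV cjM cj2 // cjK // hc.
have P0 : s ^+ q * z0 + s * z0 ^+ q - c == 0.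
  by rewrite cz0 /z0; apply/eqP; field; rewrite s0 sq0 h2.
have P1 : s ^+ q * (z0 + i * s) + s * (z0 + i * s) ^+ q - c == 0.
  by rewrite (cjD h) cjM hi cz0 /z0; apply/eqP; field; rewrite s0 sq0 h2.
rewrite hz in P0; rewrite hz in P1.
move/eqP: P0; rewrite cz0 => P0.
move/eqP: P1; rewrite (cjD h) cjM hi cz0 => P1.
have E : i * (e ^+ q * s - e * s ^+ q) = 0.
  rewrite -[RHS](subrr 0) -{1}P1 -P0; ring.
move/eqP: E; rewrite mulf_eq0 (negbTE i0) /= subr_eq0 => /eqP E.
have Eq : e ^+ q = e * s ^+ q / s by apply: (mulIf s0); rewrite E divfK.
exists (e / s); split; [|split].
- by rewrite cjM cjV Eq; field; rewrite s0 sq0.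
- by rewrite divfK.
- have -> : C = (e ^+ q * z0 + e * (c / (2 * s)) + C) - (e ^+ q * z0 + e * (c / (2 * s))) by ring.
  by rewrite P0 sub0r Eq /z0; field; rewrite s0 sq0 h2.
Qed.

Lemma uniq1 (L : finFieldType) q (s c s' c' : L) : Good L q ->
  c ^+ q = c -> c != 0 ->
  (forall z, ((z - s) * (z ^+ q - s ^+ q) == c) = ((z - s') * (z ^+ q - s' ^+ q) == c')) ->
  s = s' /\ c = c'.
Proof.
move=> h hc c0 hz.
have [i [i0 hi]] := goodi h.
have h2 := good2 h.
have [w hw] := goodN h hc c0.
have w0 : w != 0 by apply: contra c0 => /eqP w0; rewrite -hw w0 mul0r.
have wq0 : w ^+ q != 0 by rewrite cj_eq0.
have v0 : 1 + i != 0.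
  apply: contra h2 => /eqP e0; have := congr1 (fun x => x ^+ q) e0.
  rewrite (cjD h) cj1 hi (cj0 h) => e1; apply/eqP.
  have -> : (2 : L) = (1 + i) + (1 - i) by ring.
  by rewrite e0 e1 addr0.
have vb0 : 1 - i != 0.
  apply: contra h2 => /eqP e0; have := congr1 (fun x => x ^+ q) e0.
  rewrite (cjB h) cj1 hi (cj0 h) opprK => e1; apply/eqP.
  have -> : (2 : L) = (1 + i) + (1 - i) by ring.
  by rewrite e0 e1 addr0.
set t := s - s'.
have pt : forall u, u * u ^+ q = 1 ->
    (t + w * u) * (t ^+ q + w ^+ q * u ^+ q) = c'.
  move=> u hu; apply/eqP.
  have := hz (s + w * u).
  have -> : (s + w * u - s) * ((s + w * u) ^+ q - s ^+ q) == c.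
    by rewrite (cjD h) cjM; apply/eqP; rewrite -hw -[RHS]mulr1 -hu; ring.
  move=> /esym/eqP; rewrite (cjD h) cjM /t (cjB h) => e.
  by apply/eqP; rewrite -e; ring.
have e1 := pt 1 ltac:(by rewrite cj1 mulr1).
have e2 := pt (-1) ltac:(by rewrite (cjN h) cj1 mulrNN mulr1).
have e3 := pt ((1 + i) / (1 - i)).
rewrite cjM cjV (cjD h) (cjB h) cj1 hi opprK in e3.
have e3' := e3 ltac:(by field; rewrite v0 vb0).
rewrite !cj1 in e1; rewrite (cjN h) cj1 in e2.
have d12 : (t + w * 1) * (t ^+ q + w ^+ q * 1) - (t + w * -1) * (t ^+ q + w ^+ q * -1) = 0.
  by rewrite e1 e2 subrr.
have d13 : (t + w * 1) * (t ^+ q + w ^+ q * 1) -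
   (t + w * ((1 + i) / (1 - i))) * (t ^+ q + w ^+ q * ((1 - i) / (1 + i))) = 0.
  by rewrite e1 e3' subrr.
have key : (w * t ^+ q) * (- 4 * i) = (1 + i) * (1 - i) * (
   ((t + w * 1) * (t ^+ q + w ^+ q * 1) -
   (t + w * ((1 + i) / (1 - i))) * (t ^+ q + w ^+ q * ((1 - i) / (1 + i))))
   - ((t + w * 1) * (t ^+ q + w ^+ q * 1) - (t + w * -1) * (t ^+ q + w ^+ q * -1)) / 2
     * (1 - (1 - i) / (1 + i))).
  by field; rewrite v0 vb0 h2.
rewrite d12 d13 !mul0r subrr mulr0 in key.
have h4 : (- 4 : L) != 0.
  rewrite oppr_eq0; have -> : (4 : L) = 2 * 2 by ring.
  by rewrite mulf_neq0.
move/eqP: key; rewrite !mulf_eq0 (negbTE w0) (negbTE h4) (negbTE i0) cj_eq0 // /= orbF => /eqP t0.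
have ss : s = s' by apply/eqP; rewrite -subr_eq0 -/t t0.
split => //; rewrite -e1 t0 (cj0 h) -hw; ring.
Qed.


Definition scaleH (L : finFieldType) (l : L) (H : L * L * L) : L * L * L :=
  (l * H.1.1, l * H.1.2, l * H.2).

Lemma memZ_None (L : finFieldType) q (H : L * L * L) : Good L q ->
  (None \in Zs q H) = (H.1.1 == 0).
Proof.
move=> h; case: H => [[A e] C]; rewrite /Zs inE /Qf; cbn [rep fst snd].
by rewrite cj1 (cj0 h) ?mulr0 ?mul0r ?addr0 ?mulr1.
Qed.

Lemma memZ_Some (L : finFieldType) q (H : L * L * L) z :
  (Some z \in Zs q H) = (H.1.1 * z * z ^+ q + H.1.2 ^+ q * z + H.1.2 * z ^+ q + H.2 == 0).
Proof.
case: H => [[A e] C]; rewrite /Zs inE /Qf; cbn [rep fst snd].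
by rewrite cj1 !mulr1.
Qed.

Lemma uniqH (L : finFieldType) q (H : L * L * L) (D : circ L) : Good L q -> fixd q H ->
  valid_circ q D -> Zs q H = Zs q (herm q D) ->
  exists l, l ^+ q = l /\ H = scaleH l (herm q D).
Proof.
move=> h [hA hC] hD hZ.
have hN := memZ_None H h; rewrite hZ memZ_None // in hN.
have hS : forall z, (Some z \in circle_pts q D) = (Some z \in Zs q H).
  by move=> z; rewrite hZ pts_herm.
case: H hA hC hN hS {hZ} => [[A e] C]; cbn [fst snd] => hA hC hN hS.
case: D hD hN hS => s c /=.
- rewrite /inGFq => /andP [/eqP hc c0] hN hS.
  have A0 : A != 0 by rewrite -hN oner_eq0.
  have Aq0 : A ^+ q != 0 by rewrite hA.
  have [ss cc] : s = - e / A /\ c = (e * e ^+ q - A * C) / (A * A).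
    apply: (uniq1 h hc c0) => z.
    have := hS z; rewrite memZ_Some (mem_imset _ _ Some_inj) inE /mconj => ->.
    cbn [fst snd]; rewrite -[in RHS]subr_eq0.
    have -> : A * z * z ^+ q + e ^+ q * z + e * z ^+ q + C =
      A * ((z - - e / A) * (z ^+ q - (- e / A) ^+ q) - (e * e ^+ q - A * C) / (A * A)).
      rewrite cjM cjV (cjN h) hA; field; exact: A0.
    by rewrite mulf_eq0 (negbTE A0).
  exists A; split => //; rewrite /scaleH /=; cbn [fst snd].
  rewrite ss cc cjM cjV (cjN h) hA; congr (_, _, _); field => //; exact: A0.
- move=> /andP [s0 /eqP hc] hN hS.
  have A0 : A = 0 by apply/eqP; rewrite -hN.
  have [l [hl [el Cl]]] : exists l, l ^+ q = l /\ e = l * s /\ C = l * (- c).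
    apply: (uniq2 h s0 hc hC) => z.
    have := hS z; rewrite memZ_Some in_setU1 /= (mem_imset _ _ Some_inj) inE /mconj A0 !mul0r add0r => <-.
    by rewrite subr_eq0.
  exists l; split => //; rewrite /scaleH; cbn [fst snd herm].
  by rewrite A0 el Cl mulr0.
Qed.


Lemma fixd_herm (L : finFieldType) q (B : circ L) : Good L q -> valid_circ q B ->
  fixd q (herm q B).
Proof.
move=> h; case: B => s c /=; rewrite /inGFq.
- move=> /andP [/eqP hc _]; split; cbn [fst snd]; first exact: cj1.
  by rewrite (cjB h) cjM (cjK h) hc mulrC.
- move=> /andP [_ /eqP hc]; split; cbn [fst snd]; first exact: cj0.
  by rewrite (cjN h) hc.
Qed.

Lemma Delta_herm (L : finFieldType) q (B : circ L) : Good L q -> valid_circ q B ->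
  Delta q (herm q B) != 0.
Proof.
move=> h; case: B => s c /=; rewrite /inGFq /Delta.
- move=> /andP [_ c0]; rewrite (cjN h).
  have -> : - s * - s ^+ q - 1 * (s * s ^+ q - c) = c by ring.
  exact: c0.
- move=> /andP [s0 _]; rewrite mul0r subr0 mulf_neq0 // cj_eq0 //.
Qed.

Lemma Delta_scale (L : finFieldType) q (l : L) H : l ^+ q = l ->
  Delta q (scaleH l H) = l * l * Delta q H.
Proof. case: H => [[A e] C] hl; rewrite /Delta /scaleH /= cjM hl; ring. Qed.

Lemma bil_scale (L : finFieldType) q (l m : L) H H' : l ^+ q = l -> m ^+ q = m ->
  bil q (scaleH l H) (scaleH m H') = l * m * bil q H H'.
Proof.
case: H => [[A e] C]; case: H' => [[A' e'] C'] hl hm.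
rewrite /bil /scaleH /= !cjM hl hm; ring.
Qed.

Lemma core (L : finFieldType) q (B B' D D' : circ L)
  (hB : valid_circ q B) (hB' : valid_circ q B')
  (hD : valid_circ q D) (hD' : valid_circ q D')
  (a b c d : L) (hdet : a * d - b * c != 0)
  (himB : circle_pts q D = mobius a b c d @: circle_pts q B)
  (himB' : circle_pts q D' = mobius a b c d @: circle_pts q B') :
  Good L q -> cap q B B' = cap q D D'.
Proof.
move=> h; rewrite !cap_herm //.
have fB := fixd_herm h hB; have fB' := fixd_herm h hB'.
have ZD : Zs q (tr q a b c d (herm q B)) = Zs q (herm q D).
  by rewrite -img_tr // -pts_herm // -pts_herm.
have ZD' : Zs q (tr q a b c d (herm q B')) = Zs q (herm q D').
  by rewrite -img_tr // -pts_herm // -pts_herm.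
have [l [hl el]] := uniqH h (tr_fixd a b c d h fB) hD ZD.
have [m [hm em]] := uniqH h (tr_fixd a b c d h fB') hD' ZD'.
have e1 := Delta_tr a b c d h fB; rewrite el Delta_scale // in e1.
have e2 := Delta_tr a b c d h fB'; rewrite em Delta_scale // in e2.
have e3 := bil_tr a b c d h fB fB'; rewrite el em bil_scale // in e3.
set N := (a * d - b * c) * (a * d - b * c) ^+ q in e1 e2 e3.
have N0 : N != 0 by rewrite mulf_neq0 // cj_eq0.
have Y0 := Delta_herm h hB; have Y0' := Delta_herm h hB'.
have l0 : l != 0.
  apply: contra (mulf_neq0 N0 Y0) => /eqP l0; rewrite -e1 l0 !mul0r.
  by [].
have m0 : m != 0.
  apply: contra (mulf_neq0 N0 Y0') => /eqP m0; rewrite -e2 m0 !mul0r.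
  by [].
have -> : Delta q (herm q D) = N * Delta q (herm q B) / (l * l).
  by rewrite -e1; field; rewrite l0.
have -> : Delta q (herm q D') = N * Delta q (herm q B') / (m * m).
  by rewrite -e2; field; rewrite m0.
have -> : bil q (herm q D) (herm q D') = N * bil q (herm q B) (herm q B') / (l * m).
  by rewrite -e3; field; rewrite l0 m0.
by field; rewrite l0 m0 N0 Y0 Y0'.
Qed.


Lemma card_roots (F : finFieldType) (P : {poly F}) : P != 0 ->
  (#|[set x | root P x]| < size P)%N.
Proof.
move=> P0; rewrite cardE; apply: max_poly_roots => //; last exact: enum_uniq.
by apply/allP => x; rewrite mem_enum inE.
Qed.

Lemma card_Xn (F : finFieldType) (n : nat) (y : F) : (0 < n)%N ->
  (#|[set x : F | x ^+ n == y]| <= n)%N.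
Proof.
move=> n0; have P0 : ('X^n - y%:P : {poly F}) != 0.
  by rewrite -size_poly_eq0 size_XnsubC.
have := card_roots P0; rewrite size_XnsubC // ltnS; apply: leq_trans.
apply: subset_leq_card; apply/subsetP => x; rewrite !inE rootE !hornerE.
by rewrite subr_eq0.
Qed.

Lemma card_fix (F : finFieldType) (n : nat) : (1 < n)%N ->
  (#|[set x : F | x ^+ n == x]| <= n)%N.
Proof.
move=> n1; have sz : size ('X^n - 'X : {poly F}) = n.+1.
  by rewrite size_addl size_polyXn // size_polyN size_polyX.
have P0 : ('X^n - 'X : {poly F}) != 0 by rewrite -size_poly_eq0 sz.
have := card_roots P0; rewrite sz ltnS; apply: leq_trans.
apply: subset_leq_card; apply/subsetP => x; rewrite !inE rootE !hornerE.
by rewrite subr_eq0.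
Qed.


Lemma norm_surj (F : finFieldType) (q : nat) : (2 < q)%N -> #|F| = (q * q)%N ->
  (forall x : F, (x ^+ q) ^+ q = x) ->
  forall c : F, c ^+ q = c -> c != 0 -> exists w, w * w ^+ q = c.
Proof.
move=> q2 hF cc c hc c0.
case: (pickP (fun w : F => w * w ^+ q == c)) => [w /eqP hw | none]; first by exists w.
exfalso.
pose S := [set y : F | (y ^+ q == y) && (y != 0) && (y != c)].
pose R := [set y : F | y ^+ q == y].
have hR : (#|R| <= q)%N by apply: card_fix; lia.
have hS : (#|S| + 2 <= q)%N.
  have e1 := cardsD1 c R; have e2 := cardsD1 0 (R :\ c).
  have cR : c \in R by rewrite inE hc.
  have zR : 0 \in R :\ c by rewrite !inE eq_sym c0 /= expr0n; move: q2; case: (q) => //.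
  rewrite cR zR !add1n in e1 e2.
  have : (#|S| <= #|R :\ c :\ (0 : F)%R|)%N.
    apply: subset_leq_card; apply/subsetP => y; rewrite !inE.
    by case/andP => /andP [-> ->] ->.
  move=> hh; rewrite addn2; apply: leq_trans hR; rewrite e1 e2 !ltnS; exact: hh.
have hA : (#|[set~ (0 : F)%R]| <= #|S| * q.+1)%N.
  rewrite -sum1_card.
  rewrite (partition_big (fun x : F => (x * x ^+ q)%R) (fun y => y \in S)); last first.
    move=> x; rewrite !inE => x0.
    rewrite cjM cc mulrC eqxx mulf_neq0 // ?expf_neq0 //=.
    by have := none x => /= ->.
  rewrite -sum_nat_const; apply: leq_sum => y _.
  rewrite sum1dep_card.
  apply: leq_trans (card_Xn y (isT : (0 < q.+1)%N)).
  apply: subset_leq_card; apply/subsetP => x; rewrite !inE exprS.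
  by case/andP.
rewrite cardsC1 hF in hA.
nia.
Qed.


Lemma good_of (L : finFieldType) (p m : nat) : prime p -> odd p -> (0 < m)%N ->
  #|L| = ((p ^ m) ^ 2)%N -> Good L (p ^ m).
Proof.
move=> hp hodd hm hL.
have p2 : (2 < p)%N.
  have := prime_gt1 hp; case: p hp hodd {hL} => [|[|[|p]]] //.
have q2 : (2 < p ^ m)%N.
  apply: leq_trans p2 _; rewrite -{1}(expn1 p) leq_exp2l //; exact: prime_gt1.
have hLq : #|L| = (p ^ m * p ^ m)%N by rewrite hL expnS expn1.
have chp : p \in [pchar L].
  by apply: (@card_finPcharP _ _ (m * 2)); rewrite // expnM.
have cc : forall x : L, (x ^+ (p ^ m)) ^+ (p ^ m) = x.
  by move=> x; rewrite -exprM -hLq expf_card.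
split => //.
- move=> x y; apply: (GRing.exprDn_pchar).
  by rewrite pnatX (pnatE _ hp) chp.
- rewrite -(dvdn_pcharf chp); apply/negP => /(dvdn_leq (isT : (0 < 2)%N)).
  by rewrite leqNgt p2.
- case: (pickP (fun v : L => v ^+ (p ^ m) != v)) => [v hv | none].
    exists (v - v ^+ (p ^ m)); split; first by rewrite subr_eq0 eq_sym.
    rewrite exprDn_pchar ?pnatX ?(pnatE _ hp) ?chp // -mulN1r exprMn cc.
    have -> : (-1 : L) ^+ (p ^ m) = -1.
      by rewrite -signr_odd oddX hodd orbT expr1.
    ring.
  exfalso.
  have := card_fix L (ltnW q2).
  have -> : [set x : L | x ^+ (p ^ m) == x] = setT.
    by apply/setP => x; rewrite !inE; have := none x => /= /negbFE ->.
  rewrite cardsT hLq; nia.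
- exact: norm_surj.
Qed.


Theorem mainTheorem16 (L : finFieldType) (p m : nat)
  (hp : prime p) (hodd : odd p) (hm : (0 < m)%N) (hL : #|L| = ((p ^ m) ^ 2)%N)
  (B B' D D' : circ L)
  (hB : valid_circ (p ^ m) B) (hB' : valid_circ (p ^ m) B')
  (hD : valid_circ (p ^ m) D) (hD' : valid_circ (p ^ m) D')
  (a b c d : L) (hdet : a * d - b * c != 0)
  (himB : circle_pts (p ^ m) D = mobius a b c d @: circle_pts (p ^ m) B)
  (himB' : circle_pts (p ^ m) D' = mobius a b c d @: circle_pts (p ^ m) B') :
  cap (p ^ m) B B' = cap (p ^ m) D D'.
Proof.
exact: (core hB hB' hD hD' hdet himB himB' (good_of hp hodd hm hL)).
Qed.
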